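(* Fix $k$, $\theta^{(k-1)}\in\mathbb{R}^d$, step sizes $h_k,h_{k-1}>0$, $\beta_k\ge0$, and $p^{(k-1)}\in\mathbb{R}^d$; set $\theta^{(k)}=\theta^{(k-1)}+h_{k-1}p^{(k-1)}$, $v^{(k)}=D(\theta^{(k)})$, $v^{(k-1)}=D(\theta^{(k-1)})$ and $z^{(k-1)}\in\mathbb{R}^d$ with entries $z^{(k-1)}_i=(\psi^{(k)}_i,v^{(k)}-v^{(k-1)})_X$. Define the natural Heavy-Ball momentum $$p^{(k)}=\beta_k\,G_X^{(k)\dagger}G_X^{(k,k-1)}p^{(k-1)}-h_k\,G^{(k)\dagger}\nabla L(\theta^{(k)})$$ and the functional-difference momentum $$\widehat{p^{(k)}}=\frac{\beta_k}{h_{k-1}}\,G_X^{(k)\dagger}z^{(k-1)}-h_k\,G^{(k)\dagger}\nabla L(\theta^{(k)}).$$ Then $$\big\|\psi^{(k)T}\widehat{p^{(k)}}-\psi^{(k)T}p^{(k)}\big\|_X\le\frac{h_{k-1}}{2}\,\beta_k\,\kappa_{\max}(\theta^{(k-1)})\,\|p^{(k-1)}\|_2^2+o\big(h_{k-1}\|p^{(k-1)}\|_2^2\big),$$ where the remainder is understood as $h_{k-1}\|p^{(k-1)}\|_2\to0$ with $\theta^{(k-1)}$ fixed.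
   Context: $D:\mathbb{R}^d\to H$ is a twice continuously Fréchet differentiable map into a space $H$ of functions equipped with an inner product $(\cdot,\cdot)_X$ and norm $\|\cdot\|_X$. Write $\psi(\theta)=(\psi_1(\theta),\dots,\psi_d(\theta))$ with $\psi_i(\theta)=\frac{\partial D}{\partial\theta_i}(\theta)$, and for $c\in\mathbb{R}^d$, $\psi(\theta)^Tc=\sum_i c_i\psi_i(\theta)$. Let $\psi^{(j)}=\psi(\theta^{(j)})$. $G_X^{(k)}$ is the $d\times d$ Gram matrix with entries $(\psi^{(k)}_i,\psi^{(k)}_j)_X$, $G_X^{(k,k-1)}$ the cross-Gram matrix with entries $(\psi^{(k)}_i,\psi^{(k-1)}_j)_X$, and $\dagger$ denotes the Moore–Penrose pseudo-inverse. $G^{(k)}$ is any symmetric positive semi-definite $d\times d$ matrix and $\nabla L(\theta^{(k)})\in\mathbb{R}^d$ the gradient of the parameter loss $L=\mathcal{L}\circ D$; these terms are the same in both momenta. $H_D(\theta):\mathbb{R}^d\times\mathbb{R}^d\to H$ denotes the second derivative of $D$ at $\theta$, and $\kappa_{\max}(\theta)=\max_{q\in\mathbb{R}^d,\|q\|_2=1}\|H_D(\theta)(q,q)\|_X$. *)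

(* Defs.v *)
From HB Require Import structures.
From mathcomp Require Import all_boot all_order all_algebra.
From mathcomp Require Import all_classical all_reals all_analysis.
Set Implicit Arguments. Unset Strict Implicit. Unset Printing Implicit Defensive.
Import Order.TTheory GRing.Theory Num.Theory.
Import numFieldNormedType.Exports.
Local Open Scope classical_set_scope.
Local Open Scope ring_scope.

(* Euclidean norm ||c||_2 on R^d (MathComp's default matrix norm is the sup norm). *)
Definition norm2 {R : realType} {d : nat} (c : 'cV[R]_d) : R :=
  Num.sqrt (\sum_(i < d) c i 0 ^+ 2).

Definition is_inner_product {R : realType} {V : normedModType R}
  (ip : V -> V -> R) : Prop :=
  (forall x y, ip x y = ip y x) /\
  (forall (a : R) (x y z : V), ip (a *: x + y) z = a * ip x z + ip y z) /\
  (forall x, ip x x = `|x| ^+ 2).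

Definition ebasis {R : realType} {d : nat} (i : 'I_d) : 'cV[R]_d := delta_mx i 0.

Definition psi {R : realType} {V : normedModType R} {d : nat}
  (D : 'cV[R]_d -> V) (th : 'cV[R]_d) (i : 'I_d) : V :=
  'd D th (ebasis i).

Definition psiT {R : realType} {V : normedModType R} {d : nat}
  (D : 'cV[R]_d -> V) (th : 'cV[R]_d) (c : 'cV[R]_d) : V :=
  \sum_(i < d) c i 0 *: psi D th i.

Definition GramX {R : realType} {V : normedModType R} {d : nat}
  (ip : V -> V -> R) (D : 'cV[R]_d -> V) (th : 'cV[R]_d) : 'M[R]_d :=
  \matrix_(i, j) ip (psi D th i) (psi D th j).

Definition crossGramX {R : realType} {V : normedModType R} {d : nat}
  (ip : V -> V -> R) (D : 'cV[R]_d -> V) (th th' : 'cV[R]_d) : 'M[R]_d :=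
  \matrix_(i, j) ip (psi D th i) (psi D th' j).

Definition is_MP_inverse {R : realType} {m n : nat}
  (A : 'M[R]_(m, n)) (X : 'M[R]_(n, m)) : Prop :=
  [/\ A *m X *m A = A, X *m A *m X = X,
      (A *m X)^T = A *m X & (X *m A)^T = X *m A].

Definition mpinv {R : realType} {m n : nat} (A : 'M[R]_(m, n)) : 'M[R]_(n, m) :=
  xget 0 [set X | is_MP_inverse A X].

Definition HD {R : realType} {V : normedModType R} {d : nat}
  (D : 'cV[R]_d -> V) (th q r : 'cV[R]_d) : V :=
  'd (fun y => 'd D y q) th r.

Definition C2 {R : realType} {V : normedModType R} {d : nat}
  (D : 'cV[R]_d -> V) : Prop :=
  (forall x, differentiable D x) /\
  (forall q x, differentiable (fun y => 'd D y q) x) /\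
  (forall q r, continuous (fun x => HD D x q r)).

(* kappa_max(theta) = max_{||q||_2 = 1} ||H_D(theta)(q,q)||_X
   (the max is attained; we write it as the supremum). *)
Definition kappa_max {R : realType} {V : normedModType R} {d : nat}
  (D : 'cV[R]_d -> V) (th : 'cV[R]_d) : R :=
  sup [set `|HD D th q q| | q in [set q : 'cV[R]_d | norm2 q = 1]].

Definition symPSD {R : realType} {d : nat} (G : 'M[R]_d) : Prop :=
  G^T = G /\ forall c : 'cV[R]_d, 0 <= (c^T *m G *m c) 0 0.

(* Main.v *)
Require Import Defs.
From HB Require Import structures.
From mathcomp Require Import all_boot all_order all_algebra.
From mathcomp Require Import all_classical all_reals all_analysis.
From mathcomp Require Import ring lra.
Import Order.TTheory GRing.Theory Num.Theory.
Import numFieldNormedType.Exports.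
Local Open Scope classical_set_scope.
Local Open Scope ring_scope.
Set Implicit Arguments. Unset Strict Implicit.

Section IP.
Variables (R : realType) (V : normedModType R) (ip : V -> V -> R).
Hypothesis hip : is_inner_product ip.

Lemma ip_sym x y : ip x y = ip y x.
Proof. by case: hip. Qed.
Lemma ip_lin a x y z : ip (a *: x + y) z = a * ip x z + ip y z.
Proof. by case: hip => _ []. Qed.
Lemma ip_norm x : ip x x = `|x| ^+ 2.
Proof. by case: hip => _ []. Qed.
Lemma ip0l z : ip 0 z = 0.
Proof. have := ip_lin 1 0 0 z; rewrite scale1r addr0 mul1r => h.
lra. Qed.
Lemma ipDl x y z : ip (x + y) z = ip x z + ip y z.
Proof. by rewrite -[x]scale1r ip_lin mul1r scale1r. Qed.
Lemma ipZl a x z : ip (a *: x) z = a * ip x z.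
Proof. by rewrite -[a *: x]addr0 ip_lin ip0l addr0. Qed.
Lemma ipNl x z : ip (- x) z = - ip x z.
Proof. by rewrite -scaleN1r ipZl mulN1r. Qed.
Lemma ipBl x y z : ip (x - y) z = ip x z - ip y z.
Proof. by rewrite ipDl ipNl. Qed.
Lemma ipDr x y z : ip z (x + y) = ip z x + ip z y.
Proof. by rewrite ip_sym ipDl !(ip_sym z). Qed.
Lemma ipZr a x z : ip z (a *: x) = a * ip z x.
Proof. by rewrite ip_sym ipZl ip_sym. Qed.
Lemma ipBr x y z : ip z (x - y) = ip z x - ip z y.
Proof. by rewrite ip_sym ipBl !(ip_sym z). Qed.
Lemma ip_suml n (a : 'I_n -> R) (v : 'I_n -> V) z :
  ip (\sum_i a i *: v i) z = \sum_i a i * ip (v i) z.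
Proof.
elim/big_rec2: _ => [|i s w _ <-]; first exact: ip0l.
by rewrite ipDl ipZl.
Qed.
Lemma ip_sumr n (a : 'I_n -> R) (v : 'I_n -> V) z :
  ip z (\sum_i a i *: v i) = \sum_i a i * ip z (v i).
Proof. rewrite ip_sym ip_suml; apply: eq_bigr => i _; by rewrite ip_sym. Qed.

Lemma ip_CS x y : ip x y <= `|x| * `|y|.
Proof.
have Ee : ip x y = (ip (x + y) (x + y) - ip (x - y) (x - y)) / 4.
  rewrite ipBl ipDl !ipBr !ipDr (ip_sym y x); by field.
rewrite Ee !ip_norm.
have h1 : `|x + y| <= `|x| + `|y| by apply: ler_normD.
have h2 : `| `|y| - `|x| | <= `|x - y| by rewrite (distrC x y); apply: ler_dist_dist.
have n1 : 0 <= `|x + y| by [].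
have n2 : 0 <= `|x| by [].
have n3 : 0 <= `|y| by [].
have h3 : (`|y| - `|x|) ^+ 2 <= `|x - y| ^+ 2.
  by rewrite -real_normK ?num_real // lerXn2r ?nnegrE.
have h4 : `|x + y| ^+ 2 <= (`|x| + `|y|) ^+ 2 by rewrite lerXn2r ?nnegrE ?addr_ge0.
nra.
Qed.
End IP.

Section Proj.
Variables (R : realType) (V : normedModType R) (ip : V -> V -> R).
Hypothesis hip : is_inner_product ip.

Lemma proj_bound d (Ps : 'I_d -> V) (y : V) :
  `|\sum_i (mpinv (\matrix_(i, j) ip (Ps i) (Ps j)) *m \col_i ip (Ps i) y) i 0 *: Ps i|
    <= `|y|.
Proof.
set G := \matrix_(i, j) ip (Ps i) (Ps j).
set w := \col_i ip (Ps i) y.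
have [ex|nex] := pselect (exists X, is_MP_inverse G X); last first.
  rewrite /mpinv xgetPN; last by move=> X /= hX; apply: nex; exists X.
  rewrite mul0mx big1 ?normr0 // => i _; by rewrite mxE scale0r.
have hX : is_MP_inverse G (mpinv G) by apply: (xgetPex 0 ex).
set X := mpinv G in hX *.
case: hX => GXG _ _ _.
set c := X *m w.
have MG : (G *m X - 1%:M) *m G = 0 by rewrite mulmxBl mul1mx GXG subrr.
have Gc : G *m c = w.
  apply/eqP; rewrite -subr_eq0; apply/eqP.
  have -> : G *m c - w = (G *m X - 1%:M) *m w by rewrite mulmxBl mul1mx mulmxA.
  apply/matrixP => i k; rewrite (ord1 k) !mxE.
  set M := G *m X - 1%:M.
  have phi0 : \sum_j M i j *: Ps j = 0.
    apply/normr0_eq0; apply/eqP; rewrite -sqrf_eq0 -(ip_norm hip).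
    rewrite (ip_suml hip).
    under eq_bigr => j _ do rewrite (ip_sumr hip).
    under eq_bigr => j _ do rewrite mulr_sumr.
    rewrite exchange_big /=; apply/eqP; apply: big1 => l _.
    have : (M *m G) i l = 0 by rewrite MG mxE.
    rewrite mxE => H0.
    rewrite -[RHS](mulr0 (M i l)); rewrite -{2}H0 mulr_sumr; apply: eq_bigr => j _.
    have gE : G j l = ip (Ps j) (Ps l) by rewrite mxE.
    by rewrite gE mulrCA.
  transitivity (ip 0 y); last exact: ip0l hip y.
  rewrite -phi0 (ip_suml hip).
  by apply: eq_bigr => j _; congr (_ * _); rewrite /w mxE.
set P := \sum_i c i 0 *: Ps i.
have e1 : ip P P = ip P y.
  rewrite /P (ip_suml hip) (ip_suml hip); apply: eq_bigr => i _; congr (_ * _).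
  rewrite (ip_sumr hip).
  have := congr1 (fun m : 'cV[R]_d => m i 0) Gc; rewrite !mxE => <-.
  apply: eq_bigr => j _; have gE : G i j = ip (Ps i) (Ps j) by rewrite mxE.
  by rewrite gE mulrC.
have e2 : 0 <= ip (P - y) (P - y) by rewrite (ip_norm hip) sqr_ge0.
rewrite ipBl // !ipBr // (ip_sym hip y P) -e1 !(ip_norm hip) in e2.
have n1 : 0 <= `|P| by [].
have n2 : 0 <= `|y| by [].
nra.
Qed.
End Proj.

Section Norm2.
Variables (R : realType) (d : nat).
Implicit Types p q : 'cV[R]_d.

Lemma norm2_ge0 p : 0 <= norm2 p.
Proof. exact: sqrtr_ge0. Qed.

Lemma norm2_scale c p : norm2 (c *: p) = `|c| * norm2 p.
Proof.
rewrite /norm2.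
under eq_bigr => i _ do rewrite mxE exprMn.
by rewrite -mulr_sumr sqrtrM ?sqr_ge0 // sqrtr_sqr.
Qed.

Lemma entry_le_norm2 p i : `|p i 0| <= norm2 p.
Proof.
rewrite /norm2 -sqrtr_sqr ler_sqrt; last by apply: sumr_ge0 => j _; exact: sqr_ge0.
rewrite (bigD1 i) //= lerDl; apply: sumr_ge0 => j _; exact: sqr_ge0.
Qed.

Lemma mxnorm_le_norm2 p : `|p| <= norm2 p.
Proof.
have -> : `|p| = mx_norm p by []. rewrite mx_normrE; apply: bigmax_le; first exact: norm2_ge0.
move=> [i j] _ /=; rewrite (ord1 j); exact: entry_le_norm2.
Qed.

Lemma entry_le_norm p i : `|p i 0| <= `|p|.
Proof.
have -> : `|p| = mx_norm p by []. rewrite mx_normrE; exact: (le_bigmax 0 (fun ij : 'I_d * 'I_1 => `|p ij.1 ij.2|) (i, 0)).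
Qed.

Lemma cv_decomp p : p = \sum_i p i 0 *: ebasis i.
Proof.
apply/matrixP => i j; rewrite (ord1 j) summxE.
under eq_bigr => k _ do rewrite mxE /ebasis mxE.
rewrite (bigD1 i) //= big1 ?addr0; first by rewrite !eqxx mulr1.
by move=> k /negbTE ki; rewrite eq_sym ki mulr0.
Qed.
End Norm2.

Section HDsec.
Variables (R : realType) (V : normedModType R) (d : nat) (D : 'cV[R]_d -> V).
Hypothesis hD : C2 D.

Lemma dD_lin y q : 'd D y q = \sum_i q i 0 *: 'd D y (ebasis i).
Proof.
rewrite {1}(cv_decomp q) linear_sum; apply: eq_bigr => i _; by rewrite linearZ.
Qed.

Lemma diff_sum_gen (r : seq 'I_d) (a : 'I_d -> R) (f : 'I_d -> 'cV[R]_d -> V) x :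
  (forall i, differentiable (f i) x) ->
  differentiable (fun y => \sum_(i <- r) a i *: f i y) x /\
  forall v, 'd (fun y => \sum_(i <- r) a i *: f i y) x v = \sum_(i <- r) a i *: 'd (f i) x v.
Proof.
move=> df; elim: r => [|j r [IH1 IH2]].
  have -> : (fun y => \sum_(i <- [::]) a i *: f i y) = cst 0.
    by apply: funext => y; rewrite big_nil.
  by split => // v; rewrite diff_cst big_nil.
have -> : (fun y => \sum_(i <- j :: r) a i *: f i y) =
  (a j *: f j) + (fun y => \sum_(i <- r) a i *: f i y).
  by apply: funext => y; rewrite big_cons.
split; first by apply: differentiableD => //; apply: differentiableZ.
move=> v; rewrite diffD //; last by apply: differentiableZ.
by rewrite diffZ // big_cons -IH2.
Qed.
End HDsec.

Section HDsec2.
Variables (R : realType) (V : normedModType R) (d : nat) (D : 'cV[R]_d -> V).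
Hypothesis hD : C2 D.

Lemma dlin (F : 'cV[R]_d -> V) (y q : 'cV[R]_d) : 'd F y q = \sum_(i < d) q i 0 *: 'd F y (ebasis i).
Proof.
rewrite {1}(cv_decomp q) linear_sum; apply: eq_bigr => i _; by rewrite linearZ.
Qed.

Lemma HD_linl (th q r : 'cV[R]_d) : HD D th q r = \sum_(i < d) q i 0 *: HD D th (ebasis i) r.
Proof.
rewrite /HD.
have -> : (fun y => 'd D y q) = (fun y => \sum_(i < d) q i 0 *: 'd D y (ebasis i)).
  by apply: funext => y; rewrite dD_lin.
have [_ H] := @diff_sum_gen _ _ _ (index_enum 'I_d) (fun i => q i 0)
   (fun i y => 'd D y (ebasis i)) th (fun i => (proj1 (proj2 hD)) _ _).
exact: H.
Qed.

Lemma HD_linr (th q r : 'cV[R]_d) : HD D th q r = \sum_(i < d) r i 0 *: HD D th q (ebasis i).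
Proof. exact: (dlin (fun y => 'd D y q) th r). Qed.

Lemma HD_expand (th q : 'cV[R]_d) : HD D th q q =
  \sum_(i < d) \sum_(j < d) (q i 0 * q j 0) *: HD D th (ebasis i) (ebasis j).
Proof.
rewrite HD_linl; apply: eq_bigr => i _; rewrite HD_linr scaler_sumr.
by apply: eq_bigr => j _; rewrite scalerA.
Qed.

Definition Kb (th : 'cV[R]_d) := \sum_(i < d) \sum_(j < d) `|HD D th (ebasis i) (ebasis j)|.

Lemma HD_bound (th q : 'cV[R]_d) : `|HD D th q q| <= norm2 q ^+ 2 * Kb th.
Proof.
rewrite HD_expand /Kb mulr_sumr.
apply: (le_trans (ler_norm_sum _ _ _)); apply: ler_sum => i _.
rewrite mulr_sumr.
apply: (le_trans (ler_norm_sum _ _ _)); apply: ler_sum => j _.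
rewrite normrZ ler_wpM2r // normrM expr2.
by apply: ler_pM => //; apply: entry_le_norm2.
Qed.
End HDsec2.

Section HDsec3.
Variables (R : realType) (V : normedModType R) (d : nat) (D : 'cV[R]_d -> V).
Hypothesis hD : C2 D.

Lemma HD_scale (th p : 'cV[R]_d) (c : R) :
  HD D th (c *: p) (c *: p) = (c * c) *: HD D th p p.
Proof.
rewrite !(HD_expand hD) scaler_sumr; apply: eq_bigr => i _.
rewrite scaler_sumr; apply: eq_bigr => j _; rewrite !mxE scalerA; congr (_ *: _).
by rewrite mulrACA.
Qed.

Lemma HD_kappa (th p : 'cV[R]_d) : `|HD D th p p| <= kappa_max D th * norm2 p ^+ 2.
Proof.
have [n0|nn0] := eqVneq (norm2 p) 0.
  have := HD_bound hD th p; rewrite n0 expr0n /= mul0r mulr0 => h.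
  by apply: le_trans h _.
have np : 0 < norm2 p by rewrite lt_def nn0 norm2_ge0.
set q := (norm2 p)^-1 *: p.
have nq : norm2 q = 1 by rewrite norm2_scale ger0_norm ?invr_ge0 ?norm2_ge0 // mulVf.
have ub : has_ubound [set `|HD D th q q| | q in [set q : 'cV[R]_d | norm2 q = 1]].
  exists (Kb D th) => x [q' /= hq' <-]; have := HD_bound hD th q'; by rewrite hq' expr1n mul1r.
have hq : `|HD D th q q| <= kappa_max D th.
  by apply: (ub_le_sup ub); exists q.
have -> : HD D th p p = (norm2 p * norm2 p) *: HD D th q q.
  have e : norm2 p * norm2 p * ((norm2 p)^-1 * (norm2 p)^-1) = 1 by field.
  by rewrite HD_scale scalerA e scale1r.
rewrite normrZ ger0_norm ?mulr_ge0 ?norm2_ge0 // mulrC expr2.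
by rewrite ler_wpM2r // mulr_ge0 // norm2_ge0.
Qed.
End HDsec3.

Section C1.
Variables (R : realType) (V : normedModType R) (ip : V -> V -> R).
Hypothesis hip : is_inner_product ip.

Lemma ip_abs x y : `|ip x y| <= `|x| * `|y|.
Proof.
rewrite ler_norml (ip_CS hip) andbT.
have := ip_CS hip (- x) y; rewrite (ipNl hip) normrN; lra.
Qed.

Lemma ip_cont (W : V) : continuous (fun x => ip x W).
Proof.
move=> x; apply/cvgrPdist_le => e e0.
have e1 : 0 < e / (`|W| + 1) by rewrite divr_gt0 // ltr_wpDl.
near=> y.
have hy : `|x - y| <= e / (`|W| + 1).
  near: y; apply: cvgr_dist_le => //; exact: cvg_id.
rewrite -(ipBl hip); apply: (le_trans (ip_abs _ _)).
have hW : 0 <= `|W| by [].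
have hxy : 0 <= `|x - y| by [].
have : `|x - y| * (`|W| + 1) <= e by rewrite -ler_pdivlMr // ltr_wpDl.
nra.
Unshelve. all: by end_near.
Qed.

Lemma is_derive_ip (f : R -> V) (t : R) (df W : V) :
  is_derive t 1 f df -> is_derive t 1 (fun s => ip (f s) W) (ip df W).
Proof.
move=> [df1 df2].
have cf : (fun h => h^-1 *: ((f \o shift t) (h *: 1) - f t)) @ 0^' --> df.
  by rewrite -df2; exact: df1.
have E : (fun h : R => h^-1 *: (((fun s => ip (f s) W) \o shift t) (h *: 1) - ip (f t) W))
   = (fun x => ip x W) \o (fun h => h^-1 *: ((f \o shift t) (h *: 1) - f t)).
  apply: funext => h /=; rewrite (ipZl hip) (ipBl hip) //.
have cphi : (fun h : R => h^-1 *: (((fun s => ip (f s) W) \o shift t) (h *: 1) - ip (f t) W)) @ 0^' --> ip df W.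
  by rewrite E; apply: continuous_cvg => //; exact: ip_cont.
apply: DeriveDef; first by apply/cvg_ex; exists (ip df W).
exact: cvg_lim.
Qed.
End C1.

Section C2s.
Variables (R : realType) (V : normedModType R) (d : nat).

Lemma is_derive_path (D : 'cV[R]_d -> V) (th0 u : 'cV[R]_d) (t : R) :
  differentiable D (th0 + t *: u) ->
  is_derive t 1 (fun s => D (th0 + s *: u)) ('d D (th0 + t *: u) u).
Proof.
move=> dD.
set x := th0 + t *: u.
have E : (fun h : R => h^-1 *: (((fun s => D (th0 + s *: u)) \o shift t) (h *: 1)
            - D (th0 + t *: u)))
       = (fun h : R => h^-1 *: ((D \o shift x) (h *: u) - D x)).
  apply: funext => h /=; congr (_ *: (D _ - _)).
  by rewrite /x [h%:A]mulr1 scalerDl addrCA.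
have dv : derivable D x u by apply: diff_derivable.
have dval : derive D x u = 'd D x u by apply: deriveE.
apply: DeriveDef.
  by rewrite /derivable E; exact: dv.
by rewrite /derive E; exact: dval.
Qed.
End C2s.

Lemma h5_lemma (R : realType) (V : normedModType R) d (F : 'cV[R]_d -> V) (th0 u : 'cV[R]_d) (c : R) :
  F (th0 + c *: u) - F th0 - c *: 'd F th0 u = F (c *: u + th0) - F th0 - 'd F th0 (c *: u).
Proof.
rewrite [th0 + _]addrC [X in _ = _ - X]linearZ; reflexivity.
Qed.

Lemma sum_bound (R : realType) (V : normedModType R) d (u : 'cV[R]_d) (vs : 'I_d -> V) (K : R) :
  (forall i, `|vs i| <= K * `|u|) -> `|\sum_(i < d) u i 0 *: vs i| <= d%:R * K * `|u| ^+ 2.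
Proof.
move=> H; apply: (le_trans (ler_norm_sum _ _ _)).
apply: (@le_trans _ _ (\sum_(i < d) `|u| * (K * `|u|))).
  apply: ler_sum => i _; rewrite normrZ; apply: ler_pM => //; exact: entry_le_norm.
have -> : \sum_(i < d) `|u| * (K * `|u|) = d%:R * K * `|u| ^+ 2.
  rewrite sumr_const card_ord -mulr_natl; ring.
by [].
Qed.

Lemma poly_der (R : realType) (al be s : R) :
  is_derive s 1 ((id * cst al : R -> R) + (id * id) * cst be) (al + 2 * s * be).
Proof.
apply: is_derive_eq.
rewrite !scaler0 !add0r.
change (al * 1 + be * (s * 1 + s * 1) = al + 2 * s * be).
ring.
Qed.

Section Taylor.
Variables (R : realType) (V : normedModType R) (ip : V -> V -> R) (d : nat).
Hypothesis hip : is_inner_product ip.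
Variable D : 'cV[R]_d -> V.
Hypothesis hD : C2 D.

Lemma taylor2 (th0 : 'cV[R]_d) (eps : R) : 0 < eps ->
  exists2 del, 0 < del & forall u : 'cV[R]_d, norm2 u < del ->
  `|D (th0 + u) - D th0 - 'd D th0 u - 2^-1 *: HD D th0 u u| <= eps * norm2 u ^+ 2.
Proof.
move=> e0.
set e' := eps / (d%:R + 1).
have e'0 : 0 < e' by rewrite divr_gt0 // ltr_wpDl.
pose F i := fun y : 'cV[R]_d => 'd D y (ebasis i).
have dF i : differentiable (F i) th0 by exact: (proj1 (proj2 hD)).
have near_i : forall i : 'I_d, \forall v \near (0 : 'cV[R]_d),
    `|F i (v + th0) - F i th0 - 'd (F i) th0 v| <= e' * `|v|.
  move=> i; have := diff_locally (dF i); move/eqaddoP => /(_ e' e'0).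
  apply: filterS => v /= h.
  by rewrite -addrA -opprD.
have [del del0 Hdel] := (nbhs_norm0P).1 (filter_forall _ near_i).
exists del => // u hu.
have hu' : `|u| < del := le_lt_trans (mxnorm_le_norm2 u) hu.
set a := 'd D th0 u.
set b := HD D th0 u u.
set W := D (th0 + u) - D th0 - a - 2^-1 *: b.
pose phi : R -> R := (fun s : R => ip (D (th0 + s *: u)) W) -
  ((id * cst (ip a W) : R -> R) + (id * id) * cst (2^-1 * ip b W)).
pose dphi s := ip ('d D (th0 + s *: u) u) W - (ip a W + 2 * s * (2^-1 * ip b W)).
have hder (s : R) : is_derive s (1 : R) phi (dphi s).
  apply: is_deriveB; last exact: poly_der.
  apply: (is_derive_ip hip); apply: is_derive_path; exact: (proj1 hD).
have [c c01 Hc] : exists2 c, c \in `]0, 1[ & phi 1 - phi 0 = dphi c * (1 - 0).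
  apply: (@MVT R phi dphi 0 1 ltr01 (fun x _ => hder x)).
  apply: derivable_within_continuous => x hx; exact: (@ex_derive _ _ _ _ _ _ _ (hder x)).
have eW : ip W W = ip (D (th0 + u)) W - ip (D th0) W - ip a W - 2^-1 * ip b W.
  by rewrite {1}/W !(ipBl hip) (ipZl hip).
have e1 : phi 1 - phi 0 = ip W W.
  rewrite eW.
  change (ip (D (th0 + 1 *: u)) W - (1 * ip a W + 1 * 1 * (2^-1 * ip b W))
    - (ip (D (th0 + 0 *: u)) W - (0 * ip a W + 0 * 0 * (2^-1 * ip b W))) =
    ip (D (th0 + u)) W - ip (D th0) W - ip a W - 2^-1 * ip b W).
  rewrite scale1r scale0r addr0. ring.
have e2 : dphi c = ip ('d D (th0 + c *: u) u - a - c *: b) W.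
  rewrite /dphi !(ipBl hip) (ipZl hip). have r : forall x y z : R, x - (y + 2 * c * (2^-1 * z)) = x - y - c * z by move=> x y z; field.
  exact: r.
have h1 : 'd D (th0 + c *: u) u = \sum_(i < d) u i 0 *: F i (th0 + c *: u) := dD_lin _ _ _.
have h2 : a = \sum_(i < d) u i 0 *: F i th0 := dD_lin _ _ _.
have h3 : b = \sum_(i < d) u i 0 *: 'd (F i) th0 u := HD_linl hD th0 u u.
have alg : forall (X Y Z : V) (xs ys zs : 'I_d -> V),
    X = \sum_(i < d) u i 0 *: xs i -> Y = \sum_(i < d) u i 0 *: ys i ->
    Z = \sum_(i < d) u i 0 *: zs i ->
    X - Y - c *: Z = \sum_(i < d) u i 0 *: (xs i - ys i - c *: zs i).
  move=> X Y Z xs ys zs -> -> ->; rewrite scaler_sumr -!sumrB.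
  apply: eq_bigr => i _; by rewrite !scalerBr !scalerA mulrC.
have gE := alg _ _ _ _ _ _ h1 h2 h3.
have gb : `|'d D (th0 + c *: u) u - a - c *: b| <= d%:R * e' * `|u| ^+ 2.
  rewrite gE; apply: sum_bound => i.
  rewrite h5_lemma.
  move: c01; rewrite in_itv /= => /andP [c0 c1].
  have hcu : `|c *: u| <= `|u|.
    rewrite normrZ ger0_norm ?(ltW c0) //; have nu : 0 <= `|u| by []; nra.
  have := Hdel (c *: u) (le_lt_trans hcu hu') i.
  move/le_trans; apply; by rewrite ler_wpM2l // ltW.
have nW : `|W| ^+ 2 <= `|'d D (th0 + c *: u) u - a - c *: b| * `|W|.
  by rewrite -(ip_norm hip) -e1 Hc subr0 mulr1 e2 (ip_CS hip).
have hW : `|W| <= d%:R * e' * `|u| ^+ 2.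
  have n1 : 0 <= `|W| by [].
  have n2 : 0 <= `|'d D (th0 + c *: u) u - a - c *: b| by [].
  nra.
apply: (le_trans hW).
have de : d%:R * e' <= eps.
  rewrite /e' mulrCA ger_pMr // ler_pdivrMr ?mul1r ?ltr_wpDl //; lra.
have un : `|u| ^+ 2 <= norm2 u ^+ 2.
  by rewrite lerXn2r ?nnegrE ?norm2_ge0 // mxnorm_le_norm2.
apply: ler_pM => //; by rewrite mulr_ge0 // ltW.
Qed.
End Taylor.

Section Main.
Variables (R : realType) (V : normedModType R) (d : nat) (D : 'cV[R]_d -> V).

Lemma psiTB (th c1 c2 : 'cV[R]_d) : psiT D th c1 - psiT D th c2 = psiT D th (c1 - c2).
Proof.
rewrite /psiT -sumrB; apply: eq_bigr => i _; by rewrite !mxE scalerBl.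
Qed.

Lemma psiTZ (th c : 'cV[R]_d) (a : R) : psiT D th (a *: c) = a *: psiT D th c.
Proof.
rewrite /psiT scaler_sumr; apply: eq_bigr => i _; by rewrite !mxE scalerA.
Qed.

Lemma alg2 (X Y A A' B B' : V) (h : R) : h != 0 -> A' = h *: A -> B' = (h * h) *: B ->
  h^-1 *: (X - Y) - A = h^-1 *: (X - Y - A' - 2^-1 *: B') + (2^-1 * h) *: B.
Proof.
move=> hn -> ->.
have c1 : h^-1 * h = 1 by rewrite mulVf.
have c2 : h^-1 / 2 * (h * h) = 2^-1 * h by field.
rewrite !scalerBr !scalerA c1 c2 scale1r.
by rewrite subrK.
Qed.

Lemma alg3 (M : lmodType R) (P Q S : M) (b h : R) :
  (b / h) *: P - Q - (b *: S - Q) = b *: (h^-1 *: P - S).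
Proof. by rewrite opprB addrA subrK scalerBr scalerA. Qed.
End Main.

Unset Implicit Arguments.
Theorem mainTheorem4 (R : realType) (V : normedModType R) (d : nat)
  (ip : V -> V -> R) (D : 'cV[R]_d -> V)
  (Gk : 'cV[R]_d -> 'M[R]_d) (gradL : 'cV[R]_d -> 'cV[R]_d)
  (th0 : 'cV[R]_d) (hk betak : R) :
  is_inner_product ip -> C2 D ->
  (forall th, symPSD (Gk th)) ->
  0 < hk -> 0 <= betak ->
  forall eps : R, 0 < eps -> exists delta : R, 0 < delta /\
  forall (h : R) (p : 'cV[R]_d), 0 < h -> h * norm2 p < delta ->
  let th1 := th0 + h *: p in
  let z := \col_(i < d) ip (psi D th1 i) (D th1 - D th0) in
  let pk := betak *: (mpinv (GramX ip D th1) *m crossGramX ip D th1 th0 *m p)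
            - hk *: (mpinv (Gk th1) *m gradL th1) in
  let phat := (betak / h) *: (mpinv (GramX ip D th1) *m z)
            - hk *: (mpinv (Gk th1) *m gradL th1) in
  `|psiT D th1 phat - psiT D th1 pk|
    <= h / 2 * betak * kappa_max D th0 * norm2 p ^+ 2
       + eps * (h * norm2 p ^+ 2).
Proof.
move=> hip hD _ _ bk0 eps e0.
set e' := eps / (betak + 1).
have e'0 : 0 < e' by rewrite divr_gt0 // ltr_wpDl.
have [del del0 Hdel] := taylor2 hip hD th0 e'0.
exists del; split; first exact: del0.
move=> h p h0 hp; cbv zeta.
set th1 := th0 + h *: p.
set z := \col_i ip (psi D th1 i) (D th1 - D th0).
set Q := hk *: (mpinv (Gk th1) *m gradL th1).
have hn : h != 0 by rewrite gt_eqF.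
set u := h *: p.
have nu : norm2 u = h * norm2 p by rewrite /u norm2_scale gtr0_norm.
have hu : norm2 u < del by rewrite nu.
have T := Hdel u hu.
set y := h^-1 *: (D th1 - D th0) - psiT D th0 p.
have ps : psiT D th0 p = 'd D th0 p by exact: (esym (dD_lin D th0 p)).
have dz : 'd D th0 u = h *: 'd D th0 p by rewrite linearZ.
have hs : HD D th0 u u = (h * h) *: HD D th0 p p := HD_scale hD th0 p h.
have yE : y = h^-1 *: (D (th0 + u) - D th0 - 'd D th0 u - 2^-1 *: HD D th0 u u)
    + (2^-1 * h) *: HD D th0 p p.
  by rewrite /y ps; exact: alg2 hn dz hs.
have k := HD_kappa hD th0 p.
rewrite nu in T.
have yb : `|y| <= h / 2 * kappa_max D th0 * norm2 p ^+ 2 + e' * (h * norm2 p ^+ 2).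
  rewrite yE; apply: (le_trans (ler_normD _ _)); rewrite !normrZ.
  rewrite gtr0_norm ?invr_gt0 // gtr0_norm ?mulr_gt0 ?invr_gt0 //.
  have t1 : h^-1 * `|D (th0 + u) - D th0 - 'd D th0 u - 2^-1 *: HD D th0 u u|
      <= e' * (h * norm2 p ^+ 2).
    rewrite ler_pdivrMl //; apply: (le_trans T).
    rewrite le_eqVlt; apply/orP; left; apply/eqP; ring.
  have t2 : 2^-1 * h * `|HD D th0 p p| <= h / 2 * kappa_max D th0 * norm2 p ^+ 2.
    apply: (le_trans (ler_wpM2l _ k)); first by rewrite mulr_ge0 // ltW.
    rewrite le_eqVlt; apply/orP; left; apply/eqP; ring.
  rewrite (gtr0_norm h0); lra.
set X := mpinv (GramX ip D th1).
set Gc := crossGramX ip D th1 th0.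
have wE : h^-1 *: z - Gc *m p = \col_i ip (psi D th1 i) y.
  apply/matrixP => i k0; rewrite (ord1 k0) !mxE.
  rewrite /y [in RHS](ipBr hip) [in RHS](ipZr hip) /psiT [in RHS](ip_sumr hip); congr (_ - _).
  apply: eq_bigr => j _; by rewrite /Gc /crossGramX mxE mulrC.
have pE : h^-1 *: (X *m z) - X *m Gc *m p = X *m \col_i ip (psi D th1 i) y.
  by rewrite -wE mulmxBr scalemxAr mulmxA.
rewrite psiTB alg3 pE psiTZ normrZ ger0_norm //.
have pb : `|psiT D th1 (X *m \col_i ip (psi D th1 i) y)| <= `|y| :=
  proj_bound hip (psi D th1) y.
apply: (le_trans (ler_wpM2l bk0 (le_trans pb yb))).
have be : betak * e' <= eps.
  rewrite /e' mulrCA ger_pMr // ler_pdivrMr ?mul1r ?ltr_wpDl //; lra.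
have B0 : 0 <= h * norm2 p ^+ 2 by apply: mulr_ge0; [exact: ltW | apply: exprn_ge0; exact: norm2_ge0].
rewrite mulrDr.
have -> : betak * (h / 2 * kappa_max D th0 * norm2 p ^+ 2) =
  h / 2 * betak * kappa_max D th0 * norm2 p ^+ 2 by ring.
rewrite lerD2l.
apply: le_trans (ler_wpM2r B0 be); rewrite le_eqVlt; apply/orP; left; apply/eqP; ring.
Qed.
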